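(* Let $f:\mathbb{R}^n\to\mathbb{R}^m$ be smooth and let $M$ be its graph in $\mathbb{R}^{n+m}$ with induced metric. Then for each $\alpha$, the Ricci operator $Rc$ and the shape operator $A^\alpha$ satisfy $$A^\alpha Rc-Rc\,A^\alpha=U^{\mu\nu}\big((\mathrm{Tr}A^\mu)R^\perp_{\nu\alpha}+R^\perp_{\alpha\mu}A^\nu+A^\mu R^\perp_{\alpha\nu}\big),$$ with summation over $\mu,\nu$.
   Context: $M=\{(x,f(x))\}$ has tangent frame $\partial_i=(e_i,f^\alpha_ie_\alpha)$, metric $g_{ij}=\delta_{ij}+f^\alpha_if^\alpha_j$, and normal vectors $\eta^\alpha=(-Df^\alpha,e_\alpha)$, $1\le\alpha\le m$. $U_{\alpha\beta}=\langle\eta^\alpha,\eta^\beta\rangle=\delta_{\alpha\beta}+\langle Df^\alpha,Df^\beta\rangle$ with inverse $U^{\alpha\beta}$. The shape operator with respect to $\eta^\alpha$ is $A^\alpha X=-(\bar\nabla_X\eta^\alpha)^\top$, i.e. $A^\alpha\partial_i=f^\alpha_{ik}g^{kj}\partial_j$. The normal curvature operators are $R^\perp_{\alpha\beta}=A^\beta A^\alpha-A^\alpha A^\beta$. The Ricci operator $Rc:TM\to TM$ is defined by $\langle Rc(X),Y\rangle=\mathrm{Ric}(X,Y)$. *)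

(* Defs.v *)
From HB Require Import structures.
From mathcomp Require Import all_boot all_order all_algebra.
From mathcomp Require Import all_classical all_reals all_analysis.
Set Implicit Arguments.
Unset Strict Implicit.
Unset Printing Implicit Defensive.
Import Order.TTheory GRing.Theory Num.Theory.
Import numFieldNormedType.Exports.
Local Open Scope ring_scope.

(* Conventions.
   - Points of R^n are row vectors 'rV[R]_n; f : R^n -> R^m is 'rV_n -> 'rV_m,
     with component alpha : 'I_m given by  x |-> f x ord0 alpha.
   - A linear operator T on T_xM is represented in the coordinate frame
     (d_1,...,d_n) by the matrix M with  T d_j = sum_i M i j d_i
     (column convention), so composition of operators is matrix product *m
     and the trace of an operator is \tr of its matrix. *)

Section Graph.
Variables (R : realType) (n m : nat).

Definition evec (i : 'I_n) : 'rV[R]_n := delta_mx 0 i.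

Definition pd (i : 'I_n) (h : 'rV[R]_n -> R) : 'rV[R]_n -> R :=
  fun x => derive h x (evec i).

Definition iter_pd (l : seq 'I_n) (h : 'rV[R]_n -> R) : 'rV[R]_n -> R :=
  foldr pd h l.

Definition smooth_fun (h : 'rV[R]_n -> R) : Prop :=
  forall (l : seq 'I_n) (x : 'rV[R]_n), differentiable (iter_pd l h) x.

Variable f : 'rV[R]_n -> 'rV[R]_m.

Definition fcomp (a : 'I_m) : 'rV[R]_n -> R := fun x => f x ord0 a.

Definition Df (a : 'I_m) (i : 'I_n) : 'rV[R]_n -> R := pd i (fcomp a).

Definition metric (i j : 'I_n) : 'rV[R]_n -> R :=
  fun x => (i == j)%:R + \sum_(a < m) Df a i x * Df a j x.

Definition gmx (x : 'rV[R]_n) : 'M[R]_n := \matrix_(i, j) metric i j x.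
Definition ginv (x : 'rV[R]_n) : 'M[R]_n := invmx (gmx x).

Definition christoffel (k i j : 'I_n) : 'rV[R]_n -> R :=
  fun x => 2^-1 * \sum_(l < n) ginv x k l *
             (pd i (metric j l) x + pd j (metric i l) x - pd l (metric i j) x).

(* R(d_i,d_j)d_k = nabla_i nabla_j d_k - nabla_j nabla_i d_k = R^l_{ijk} d_l *)
Definition riem (l i j k : 'I_n) : 'rV[R]_n -> R :=
  fun x => pd i (christoffel l j k) x - pd j (christoffel l i k) x
           + \sum_(p < n) (christoffel l i p x * christoffel p j k x
                           - christoffel l j p x * christoffel p i k x).

Definition ricci (j k : 'I_n) : 'rV[R]_n -> R :=
  fun x => \sum_(i < n) riem i i j k x.

Definition Ricmx (x : 'rV[R]_n) : 'M[R]_n := \matrix_(j, k) ricci j k x.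

(* Ricci operator: <Rc X, Y> = Ric(X,Y) *)
Definition Rc_op (x : 'rV[R]_n) : 'M[R]_n := ginv x *m Ricmx x.

Definition Hess (a : 'I_m) (x : 'rV[R]_n) : 'M[R]_n :=
  \matrix_(i, k) pd k (Df a i) x.

Definition shapeop (a : 'I_m) (x : 'rV[R]_n) : 'M[R]_n := ginv x *m Hess a x.

Definition Umx (x : 'rV[R]_n) : 'M[R]_m :=
  \matrix_(a, b) ((a == b)%:R + \sum_(i < n) Df a i x * Df b i x).
Definition Uinv (x : 'rV[R]_n) : 'M[R]_m := invmx (Umx x).

Definition normal_curv (a b : 'I_m) (x : 'rV[R]_n) : 'M[R]_n :=
  shapeop b x *m shapeop a x - shapeop a x *m shapeop b x.

End Graph.

(* Main.v *)
Require Import Defs.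
From HB Require Import structures.
From mathcomp Require Import all_boot all_order all_algebra.
From mathcomp Require Import all_classical all_reals all_analysis.
From mathcomp Require Import fingroup perm ring lra.
Import Order.TTheory GRing.Theory Num.Theory.
Import numFieldNormedType.Exports.
Local Open Scope ring_scope.
Set Implicit Arguments.
Unset Strict Implicit.
Unset Printing Implicit Defensive.
Section SmoothA.
Variables (R : realType) (n : nat).
Implicit Types (h : 'rV[R]_n -> R) (x y : 'rV[R]_n).

Lemma pdD i h1 h2 x : differentiable h1 x -> differentiable h2 x ->
  pd i (fun y => h1 y + h2 y) x = pd i h1 x + pd i h2 x.
Proof.
move=> d1 d2; rewrite /pd.
have -> : (fun y => h1 y + h2 y) = h1 + h2 by [].
by rewrite deriveD //; apply: diff_derivable.
Qed.

Lemma pdM i h1 h2 x : differentiable h1 x -> differentiable h2 x ->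
  pd i (fun y => h1 y * h2 y) x = pd i h1 x * h2 x + h1 x * pd i h2 x.
Proof.
move=> d1 d2; rewrite /pd.
have -> : (fun y => h1 y * h2 y) = h1 * h2 by [].
rewrite deriveM; try by apply: diff_derivable.
by rewrite /GRing.scale /= addrC mulrC [h1 x * _]mulrC.
Qed.

Lemma pdC i (c : R) x : pd i (fun _ => c) x = 0.
Proof. by rewrite /pd; have -> : (fun _ : 'rV[R]_n => c) = cst c by []; rewrite derive_cst. Qed.

Lemma pdV i h x : differentiable h x -> h x != 0 ->
  pd i (fun y => (h y)^-1) x = - (h x)^-2 * pd i h x.
Proof.
by move=> d1 nz; rewrite /pd deriveV //; apply: diff_derivable.
Qed.

Lemma diffD h1 h2 x : differentiable h1 x -> differentiable h2 x ->
  differentiable (fun y => h1 y + h2 y) x.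
Proof. move=> d1 d2; exact: differentiableD. Qed.

Lemma diffM h1 h2 x : differentiable h1 x -> differentiable h2 x ->
  differentiable (fun y => h1 y * h2 y) x.
Proof. move=> d1 d2; exact: differentiableM. Qed.

Lemma diffC (c : R) x : differentiable (fun _ : 'rV[R]_n => c) x.
Proof. exact: differentiable_cst. Qed.

Lemma diffV h x : differentiable h x -> h x != 0 ->
  differentiable (fun y => (h y)^-1) x.
Proof. move=> d1 nz; exact: differentiableV. Qed.

End SmoothA.
Section SmoothB.
Variables (R : realType) (n : nat).
Implicit Types (h : 'rV[R]_n -> R) (x y : 'rV[R]_n).

Lemma diff_sum (I : Type) (r : seq I) (P : pred I) (F : I -> 'rV[R]_n -> R) x :
  (forall i, P i -> differentiable (F i) x) ->
  differentiable (fun y => \sum_(i <- r | P i) F i y) x.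
Proof.
move=> dF; elim: r => [|a r IH].
  have -> : (fun y => \sum_(i <- [::] | P i) F i y) = fun _ => 0.
    by apply: funext => y; rewrite big_nil.
  exact: diffC.
have -> : (fun y => \sum_(i <- a :: r | P i) F i y) =
   fun y => (if P a then F a y else 0) + \sum_(i <- r | P i) F i y.
  by apply: funext => y; rewrite big_cons; case: (P a); rewrite ?add0r.
apply: diffD => //; case Pa: (P a); [exact: dF | exact: diffC].
Qed.

Lemma pd_sum (I : Type) (r : seq I) (P : pred I) (F : I -> 'rV[R]_n -> R) i x :
  (forall j, P j -> differentiable (F j) x) ->
  pd i (fun y => \sum_(j <- r | P j) F j y) x = \sum_(j <- r | P j) pd i (F j) x.
Proof.
move=> dF; elim: r => [|a r IH].
  have -> : (fun y => \sum_(j <- [::] | P j) F j y) = fun _ => 0.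
    by apply: funext => y; rewrite big_nil.
  by rewrite pdC big_nil.
have -> : (fun y => \sum_(j <- a :: r | P j) F j y) =
   fun y => (if P a then F a y else 0) + \sum_(j <- r | P j) F j y.
  by apply: funext => y; rewrite big_cons; case: (P a); rewrite ?add0r.
rewrite pdD; last exact: diff_sum.
  rewrite IH big_cons; case Pa: (P a) => //.
  by rewrite pdC add0r.
by case Pa: (P a); [exact: dF | exact: diffC].
Qed.

Fixpoint Ck (k : nat) (h : 'rV[R]_n -> R) : Prop :=
  match k with
  | 0 => True
  | k.+1 => (forall y, differentiable h y) /\ forall i, Ck k (pd i h)
  end.

Lemma Ck_mono k h : Ck k.+1 h -> Ck k h.
Proof.
elim: k h => [//|k IH] h [dh Hi]; split => // i; exact: IH.
Qed.

Lemma Ck_le k k' h : (k <= k')%N -> Ck k' h -> Ck k h.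
Proof.
move=> /subnK <-; elim: (k' - k)%N => [//|d IH] H.
apply: IH; rewrite addSn in H; exact: Ck_mono.
Qed.

Lemma Ck_iter l k h : Ck (k + size l) h -> Ck k (iter_pd l h).
Proof.
elim: l k => [|i l IH] k /=; first by rewrite addn0.
rewrite addnS -addSn => /IH [_]; exact.
Qed.

Lemma smoothE h : smooth_fun h <-> forall k, Ck k h.
Proof.
split.
  move=> sh k; elim: k h sh => [//|k IH] h sh; split.
    by move=> y; exact: (sh [::] y).
  move=> i; apply: IH => l y.
  have -> : iter_pd l (pd i h) = iter_pd (l ++ [:: i]) h.
    by rewrite /iter_pd foldr_cat.
  exact: sh.
move=> H l y; have := Ck_iter (H (1 + size l)%N) => -[]; by [].
Qed.

Lemma CkD k h1 h2 : Ck k h1 -> Ck k h2 -> Ck k (fun y => h1 y + h2 y).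
Proof.
elim: k h1 h2 => [//|k IH] h1 h2 [d1 H1] [d2 H2]; split.
  by move=> y; apply: diffD.
move=> i; have -> : pd i (fun y => h1 y + h2 y) = fun y => pd i h1 y + pd i h2 y.
  by apply: funext => y; rewrite pdD.
exact: IH (H1 i) (H2 i).
Qed.

Lemma CkC k (c : R) : Ck k (fun _ => c).
Proof.
elim: k c => [//|k IH] c; split; first by move=> y; exact: diffC.
move=> i; have -> : pd i (fun _ : 'rV[R]_n => c) = fun _ => 0.
  by apply: funext => y; rewrite pdC.
exact: IH.
Qed.

Lemma CkM k h1 h2 : Ck k h1 -> Ck k h2 -> Ck k (fun y => h1 y * h2 y).
Proof.
elim: k h1 h2 => [//|k IH] h1 h2 C1 C2.
have C1' := Ck_mono C1; have C2' := Ck_mono C2.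
case: C1 C2 => [d1 H1] [d2 H2]; split.
  by move=> y; apply: diffM.
move=> i; have -> : pd i (fun y => h1 y * h2 y) =
     fun y => pd i h1 y * h2 y + h1 y * pd i h2 y.
  by apply: funext => y; rewrite pdM.
by apply: CkD; [apply: IH (H1 i) C2' | apply: IH C1' (H2 i)].
Qed.

Lemma CkV k h : (forall y, h y != 0) -> Ck k h -> Ck k (fun y => (h y)^-1).
Proof.
move=> nz; elim: k h nz => [//|k IH] h nz C1.
have C1' := Ck_mono C1; case: C1 => [d1 H1]; split.
  by move=> y; apply: diffV.
move=> i; have -> : pd i (fun y => (h y)^-1) =
     fun y => (-1 * ((h y)^-1 * (h y)^-1)) * pd i h y.
  by apply: funext => y; rewrite pdV // expr2 invfM mulN1r.
apply: (CkM (h1 := fun y => -1 * ((h y)^-1 * (h y)^-1)) (h2 := pd i h)); last exact: H1.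
apply: (CkM (h1 := fun _ => -1) (h2 := fun y => ((h y)^-1 * (h y)^-1))); first exact: CkC.
by have := IH _ nz C1'; move=> C; apply: (CkM C C).
Qed.

Lemma Ck_sum k (I : Type) (r : seq I) (P : pred I) (F : I -> 'rV[R]_n -> R) :
  (forall i, P i -> Ck k (F i)) -> Ck k (fun y => \sum_(i <- r | P i) F i y).
Proof.
move=> HF; elim: r => [|a r IH].
  have -> : (fun y => \sum_(i <- [::] | P i) F i y) = fun _ => 0.
    by apply: funext => y; rewrite big_nil.
  exact: CkC.
have -> : (fun y => \sum_(i <- a :: r | P i) F i y) =
   fun y => (if P a then F a y else 0) + \sum_(i <- r | P i) F i y.
  by apply: funext => y; rewrite big_cons; case: (P a); rewrite ?add0r.
apply: CkD => //; case Pa: (P a); [exact: HF | exact: CkC].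
Qed.

Lemma Ck_prod k (I : Type) (r : seq I) (P : pred I) (F : I -> 'rV[R]_n -> R) :
  (forall i, P i -> Ck k (F i)) -> Ck k (fun y => \prod_(i <- r | P i) F i y).
Proof.
move=> HF; elim: r => [|a r IH].
  have -> : (fun y => \prod_(i <- [::] | P i) F i y) = fun _ => 1.
    by apply: funext => y; rewrite big_nil.
  exact: CkC.
have -> : (fun y => \prod_(i <- a :: r | P i) F i y) =
   fun y => (if P a then F a y else 1) * \prod_(i <- r | P i) F i y.
  by apply: funext => y; rewrite big_cons; case: (P a); rewrite ?mul1r.
apply: CkM => //; case Pa: (P a); [exact: HF | exact: CkC].
Qed.

Lemma Ck_det k p (M : 'rV[R]_n -> 'M[R]_p) :
  (forall i j, Ck k (fun y => M y i j)) -> Ck k (fun y => \det (M y)).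
Proof.
move=> HM; have -> : (fun y => \det (M y)) =
  fun y => \sum_(s : 'S_p) ((-1) ^+ s * \prod_i M y i (s i)).
  by apply: funext => y; rewrite /determinant.
apply: Ck_sum => s _; apply: CkM; first exact: CkC.
by apply: Ck_prod => i _.
Qed.

End SmoothB.
Section Schwarz.
Variables (R : realType) (n : nat).
Implicit Types (h g : 'rV[R]_n -> R) (x y p q v w : 'rV[R]_n).
Local Open Scope classical_set_scope.

Lemma derive_shift g q w v : derive (fun y => g (y + w)) q v = derive g (q + w) v.
Proof.
rewrite /derive; do 2 f_equal; apply: funext => hh /=.
by rewrite addrA.
Qed.

Lemma derivable_shift g q w v : derivable g (q + w) v -> derivable (fun y => g (y + w)) q v.
Proof.
move=> H; have E1 : (fun y => g (y + w)) \o shift q = g \o shift (q + w).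
  by apply: funext => z /=; rewrite addrA.
by rewrite /derivable E1.
Qed.

Lemma derive_line g p v (s : R) : derive (fun r : R => g (p + r *: v)) s 1 = derive g (p + s *: v) v.
Proof.
rewrite /derive; do 2 f_equal; apply: funext => hh /=.
by rewrite -[hh *: (1:R)]/(hh * 1) mulr1 scalerDl addrCA.
Qed.

Lemma derivable_line g p v (s : R) : derivable g (p + s *: v) v -> derivable (fun r : R => g (p + r *: v)) s 1.
Proof.
move/derivable1P => H; apply/derivable1P.
have -> : (fun h : R => g (p + (h *: (1:R) + s) *: v)) = (fun h : R => g (h *: v + (p + s *: v))).
  by apply: funext => hh; rewrite -[hh *: (1:R)]/(hh * 1) mulr1 scalerDl addrCA.
exact: H.
Qed.

End Schwarz.
Section Schwarz2.
Variables (R : realType) (n : nat).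
Implicit Types (h g : 'rV[R]_n -> R) (x y p q v w : 'rV[R]_n).

Lemma mvt_dir g p v (t : R) : (forall y, derivable g y v) -> 0 < t ->
  exists2 c, 0 < c < t & g (p + t *: v) - g p = t * derive g (p + c *: v) v.
Proof.
move=> dg t0.
have [||c cin E] := @MVT R (fun r : R => g (p + r *: v)) (fun r => derive g (p + r *: v) v) 0 t t0.
- move=> r _; apply: DeriveDef; [exact: derivable_line | exact: derive_line].
- apply: derivable_within_continuous => r _; exact: derivable_line.
exists c; first by rewrite in_itv /= in cin.
by move: E; rewrite scale0r addr0 subr0 mulrC.
Qed.

End Schwarz2.
Section Schwarz3.
Variables (R : realType) (n : nat).
Implicit Types (h g : 'rV[R]_n -> R) (x y p q v w : 'rV[R]_n).

Lemma delta_eq h i k x (t : R) : (forall y, differentiable h y) ->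
  (forall y, differentiable (pd i h) y) -> 0 < t ->
  exists c1, exists c2, (0 < c1 < t) /\ (0 < c2 < t) /\
  h (x + t *: evec R i + t *: evec R k) - h (x + t *: evec R i) - h (x + t *: evec R k) + h x
  = t * t * pd k (pd i h) (x + c1 *: evec R i + c2 *: evec R k).
Proof.
move=> dh dih t0.
set ei := evec R i; set ek := evec R k.
have dg : forall y, derivable ((fun y => h (y + t *: ek)) - h) y ei.
  move=> y; apply: derivableB; last exact: diff_derivable.
  by apply: derivable_shift; exact: diff_derivable.
have [c1 c1in E1] := mvt_dir x dg t0.
have [c2 c2in E2] := mvt_dir (x + c1 *: ei) (fun y => diff_derivable (v := ek) (dih y)) t0.
exists c1, c2; split => //; split => //.
move: E1; rewrite deriveB; last exact: diff_derivable.
  2: by apply: derivable_shift; exact: diff_derivable.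
rewrite derive_shift /= -/(pd i h (x + c1 *: ei + t *: ek)) -/(pd i h (x + c1 *: ei)) E2.
rewrite -/(pd k (pd i h) _) => E1.
rewrite -mulrA -E1.
apply: (@eq_trans _ _ ((h (x + t *: ei + t *: ek) - h (x + t *: ei)) - (h (x + t *: ek) - h x))); [ring | reflexivity].
Qed.

End Schwarz3.
Section Schwarz4.
Variables (R : realType) (n : nat).
Implicit Types (h g : 'rV[R]_n -> R) (x y p q v w : 'rV[R]_n).

Lemma near_pt x (c1 c2 t : R) u w : 0 < c1 < t -> 0 < c2 < t ->
  `|x - (x + c1 *: u + c2 *: w)| < t * (`|u| + `|w| + 1).
Proof.
move=> /andP[c10 c1t] /andP[c20 c2t].
rewrite -addrA opprD addrA subrr add0r normrN.
apply: le_lt_trans (ler_normD _ _) _; rewrite !normrZ !gtr0_norm //.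
have u0 := normr_ge0 u; have w0 := normr_ge0 w.
nra.
Qed.

Lemma cont_ball (A : 'rV[R]_n -> R) x e : differentiable A x -> 0 < e ->
  exists2 d, 0 < d & forall z, `|x - z| < d -> `|A x - A z| < e.
Proof.
move=> dA e0.
have cA := differentiable_continuous dA.
have H : \forall t \near x, `|A x - A t| < e.
  by move: cA => /cvgrPdist_lt; apply.
have [d d0 Hd] := (nbhs_ballP x _).1 H; exists d => // z xz.
apply: Hd; by rewrite -ball_normE /ball_ /=.
Qed.

End Schwarz4.
Section Schwarz5.
Variables (R : realType) (n : nat).
Implicit Types (h g : 'rV[R]_n -> R) (x y p q v w : 'rV[R]_n).

Lemma schwarz h i k x : (forall y, differentiable h y) ->
  (forall y, differentiable (pd i h) y) -> (forall y, differentiable (pd k h) y) ->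
  differentiable (pd k (pd i h)) x -> differentiable (pd i (pd k h)) x ->
  pd k (pd i h) x = pd i (pd k h) x.
Proof.
move=> dh dih dkh dA dB.
set A := pd k (pd i h); set B := pd i (pd k h).
suff H : forall e, 0 < e -> `|A x - B x| < e + e.
  apply/eqP; rewrite -subr_eq0 -normr_le0; rewrite leNgt; apply/negP => d0.
  have := H _ (divr_gt0 d0 (ltr0Sn _ 1)); lra.
move=> e e0.
have [d1 d10 H1] := cont_ball dA e0.
have [d2 d20 H2] := cont_ball dB e0.
set C := `|evec R i| + `|evec R k| + 1.
have C0 : 0 < C by rewrite /C; have := normr_ge0 (evec R i); have := normr_ge0 (evec R k); lra.
set t := Num.min d1 d2 / C.
have t0 : 0 < t by rewrite divr_gt0 // lt_min d10 d20.
have tC : t * C = Num.min d1 d2 by rewrite /t divfK // gt_eqF.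
have [c1 [c2 [c1t [c2t E1]]]] := @delta_eq R n h i k x t dh dih t0.
have [c3 [c4 [c3t [c4t E2]]]] := @delta_eq R n h k i x t dh dkh t0.
have EAB : A (x + c1 *: evec R i + c2 *: evec R k) = B (x + c3 *: evec R k + c4 *: evec R i).
  apply: (mulfI (mulf_neq0 (negbT (gt_eqF t0)) (negbT (gt_eqF t0)))).
  refine (etrans (esym E1) (etrans _ E2)).
  rewrite (addrAC x (t *: evec R k)).
  move: (h (x + t *: evec R i + t *: evec R k)) (h (x + t *: evec R i)) (h (x + t *: evec R k)) (h x) => a b c d.
  ring.
have N1 := near_pt x (evec R i) (evec R k) c1t c2t.
have N2 := near_pt x (evec R k) (evec R i) c3t c4t.
have m1 : Num.min d1 d2 <= d1 by rewrite ge_min lexx.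
have m2 : Num.min d1 d2 <= d2 by rewrite ge_min lexx orbT.
rewrite -/C tC in N1; rewrite (addrC `|evec R k|) -/C tC in N2.
have HA := H1 _ (lt_le_trans N1 m1).
have HB := H2 _ (lt_le_trans N2 m2).
move: HA HB; rewrite -/A -/B EAB.
move: (A x) (B x) (B (x + c3 *: evec R k + c4 *: evec R i)) => a b c HA HB.
have -> : a - b = (a - c) - (b - c) by ring.
apply: le_lt_trans (ler_normB _ _) _.
exact: ltrD.
Qed.
End Schwarz5.
Section Alg1.
Variable (R : realFieldType).

Lemma sq_mx_eq0 q (u : 'rV[R]_q) : (u *m u^T) 0 0 = 0 -> u = 0.
Proof.
rewrite mxE => H; apply/matrixP => i j; rewrite (ord1 i) mxE.
have H2 := psumr_eq0P (P := xpredT) (fun k _ => sqr_ge0 (u 0 k)).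
apply/eqP; rewrite -sqrf_eq0; apply/eqP; apply: H2 => //.
by apply: etrans H; apply: eq_bigr => k _; rewrite mxE expr2.
Qed.

Lemma sq_mx_ge0 q (u : 'rV[R]_q) : 0 <= (u *m u^T) 0 0.
Proof.
rewrite mxE; apply: sumr_ge0 => k _; rewrite mxE -expr2; exact: sqr_ge0.
Qed.

Lemma unit_IDD p q (A : 'M[R]_(p,q)) : (1%:M + A^T *m A) \in unitmx.
Proof.
rewrite -row_free_unit; apply: inj_row_free => v Hv.
have E : (v *m (1%:M + A^T *m A) *m v^T) 0 0 = 0 by rewrite Hv mul0mx mxE.
move: E; rewrite mulmxDr mulmx1 mulmxDl mulmxA -(trmxK A) -mulmxA -trmx_mul.
rewrite trmxK mxE => /eqP; rewrite paddr_eq0 ?sq_mx_ge0 // => /andP[/eqP E _].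
exact: sq_mx_eq0.
Qed.

End Alg1.
Section GraphSmooth.
Variables (R : realType) (n m : nat) (f : 'rV[R]_n -> 'rV[R]_m).
Hypothesis hf : forall a : 'I_m, smooth_fun (fcomp f a).

Definition Dm (y : 'rV[R]_n) : 'M[R]_(m,n) := \matrix_(a, i) Df f a i y.

Lemma gmxE y : gmx f y = 1%:M + (Dm y)^T *m Dm y.
Proof.
apply/matrixP => i j; rewrite !mxE; congr (_ + _).
by apply: eq_bigr => a _; rewrite !mxE.
Qed.

Lemma UmxE y : Umx f y = 1%:M + Dm y *m (Dm y)^T.
Proof.
apply/matrixP => a b; rewrite !mxE; congr (_ + _).
by apply: eq_bigr => i _; rewrite !mxE.
Qed.

Lemma gmx_unit y : gmx f y \in unitmx.
Proof. by rewrite gmxE; apply: unit_IDD. Qed.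

Lemma Ck_pd k (h : 'rV[R]_n -> R) i : Ck k.+1 h -> Ck k (pd i h).
Proof. by case=> _; apply. Qed.

Lemma Ck_diff k (h : 'rV[R]_n -> R) y : Ck k.+1 h -> differentiable h y.
Proof. by case=> H _; apply: H. Qed.

Lemma CF a k : Ck k (fcomp f a).
Proof. by have := (smoothE (fcomp f a)).1 (hf a); apply. Qed.

Lemma CDf a i k : Ck k (Df f a i).
Proof. exact: Ck_pd (CF a k.+1). Qed.

Lemma HessE a i j : (fun y => Hess f a y i j) = pd j (Df f a i).
Proof. by apply: funext => y; rewrite mxE. Qed.

Lemma CHess a i j k : Ck k (fun y => Hess f a y i j).
Proof. rewrite HessE; exact: Ck_pd (CDf a i k.+1). Qed.

Lemma Cmetric i j k : Ck k (metric f i j).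
Proof.
apply: CkD; first exact: CkC.
by apply: Ck_sum => a _; apply: CkM; apply: CDf.
Qed.

Lemma Cdet k : Ck k (fun y => \det (gmx f y)).
Proof.
apply: (Ck_det (M := gmx f)) => i j.
have -> : (fun y => gmx f y i j) = metric f i j by apply: funext => y; rewrite mxE.
exact: Cmetric.
Qed.

Lemma det_nz y : \det (gmx f y) != 0.
Proof. by have := gmx_unit y; rewrite unitmxE unitfE. Qed.

Lemma ginvE y i j : ginv f y i j =
  (\det (gmx f y))^-1 * ((-1) ^+ (j + i) * \det (row' j (col' i (gmx f y)))).
Proof. by rewrite /ginv /invmx gmx_unit !mxE. Qed.

Lemma Cginv i j k : Ck k (fun y => ginv f y i j).
Proof.
have -> : (fun y => ginv f y i j) = fun y => (\det (gmx f y))^-1 *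
   ((-1) ^+ (j + i) * \det (row' j (col' i (gmx f y)))).
  by apply: funext => y; rewrite ginvE.
apply: CkM; first by apply: CkV; [exact: det_nz | exact: Cdet].
apply: CkM; first exact: CkC.
apply: (Ck_det (M := fun y => row' j (col' i (gmx f y)))) => a b.
have -> : (fun y => row' j (col' i (gmx f y)) a b) = metric f (lift j a) (lift i b).
  by apply: funext => y; rewrite !mxE.
exact: Cmetric.
Qed.

End GraphSmooth.
Section GraphSym.
Variables (R : realType) (n m : nat) (f : 'rV[R]_n -> 'rV[R]_m).
Hypothesis hf : forall a : 'I_m, smooth_fun (fcomp f a).

Lemma schwarzC (h : 'rV[R]_n -> R) i k x : Ck 3 h -> pd k (pd i h) x = pd i (pd k h) x.
Proof.
move=> C3; apply: schwarz.
- by move=> y; apply: (Ck_diff (k := 2)).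
- by move=> y; apply: (Ck_diff (k := 1)); apply: Ck_pd.
- by move=> y; apply: (Ck_diff (k := 1)); apply: Ck_pd.
- by apply: (Ck_diff (k := 0)); apply: Ck_pd; apply: Ck_pd.
- by apply: (Ck_diff (k := 0)); apply: Ck_pd; apply: Ck_pd.
Qed.

Lemma Hsym a i j y : Hess f a y i j = Hess f a y j i.
Proof. rewrite !mxE; apply: schwarzC; exact: CF. Qed.

Lemma HsymF a i j : pd j (pd i (fcomp f a)) = pd i (pd j (fcomp f a)).
Proof. by apply: funext => y; have := Hsym a i j y; rewrite !mxE. Qed.

Lemma Tsym a i j k x :
  pd i (fun y => Hess f a y j k) x = pd j (fun y => Hess f a y i k) x.
Proof.
rewrite !HessE /Df.
rewrite (@schwarzC (pd j (fcomp f a)) k i x); last exact: Ck_pd (CF hf a 4).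
rewrite HsymF.
rewrite (@schwarzC (pd i (fcomp f a)) j k x) //; exact: Ck_pd (CF hf a 4).
Qed.

Lemma pd_metric p i j y : pd p (metric f i j) y =
  \sum_a (Hess f a y i p * Df f a j y + Df f a i y * Hess f a y j p).
Proof.
rewrite /metric pdD; first last.
- by apply: diff_sum => a _; apply: diffM; apply: (Ck_diff (k := 0)); apply: CDf.
- exact: diffC.
rewrite pdC add0r pd_sum; last first.
  by move=> a _; apply: diffM; apply: (Ck_diff (k := 0)); apply: CDf.
apply: eq_bigr => a _; rewrite pdM; try by apply: (Ck_diff (k := 0)); apply: CDf.
by rewrite !mxE.
Qed.

Definition Wm (y : 'rV[R]_n) : 'M[R]_(n,m) := ginv f y *m (Dm f y)^T.

Lemma christoffelE k i j y :
  christoffel f k i j y = \sum_a Hess f a y i j * Wm y k a.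
Proof.
have E : forall l, pd i (metric f j l) y + pd j (metric f i l) y - pd l (metric f i j) y
    = 2 * \sum_a Hess f a y i j * Df f a l y.
  move=> l; rewrite !pd_metric -big_split /= -sumrB big_distrr /=.
  apply: eq_bigr => a _.
  rewrite (Hsym a j i) (Hsym a l i) (Hsym a l j).
  move: (Hess f a y i j) (Hess f a y i l) (Hess f a y j l) (Df f a i y) (Df f a j y) (Df f a l y).
  move=> h1 h2 h3 d1 d2 d3; ring.
rewrite /christoffel.
transitivity (\sum_l \sum_a Hess f a y i j * (ginv f y k l * Df f a l y)).
  rewrite big_distrr; apply: eq_bigr => l _ /=; rewrite E.
  rewrite mulrCA mulrA mulrA divfK ?pnatr_eq0 // big_distrr; apply: eq_bigr => a _.
  by rewrite mulrCA.
rewrite exchange_big; apply: eq_bigr => a _; rewrite /Wm !mxE big_distrr.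
by apply: eq_bigr => l _; rewrite !mxE.
Qed.

End GraphSym.
Section GraphDeriv.
Variables (R : realType) (n m : nat) (f : 'rV[R]_n -> 'rV[R]_m).
Hypothesis hf : forall a : 'I_m, smooth_fun (fcomp f a).
Variable x : 'rV[R]_n.

Let dF a i y : differentiable (Df f a i) y.
Proof. exact: (Ck_diff (k := 0)) (CDf hf a i 1). Qed.
Let dGi' s t y : differentiable (fun y => ginv f y s t) y.
Proof. exact: (Ck_diff (k := 0)) (Cginv hf s t 1). Qed.
Let dmet s t y : differentiable (metric f s t) y.
Proof. exact: (Ck_diff (k := 0)) (Cmetric hf s t 1). Qed.
Let dH a s t y : differentiable (fun y => Hess f a y s t) y.
Proof. exact: (Ck_diff (k := 0)) (CHess hf a s t 1). Qed.

Definition Kmx (i : 'I_n) : 'M[R]_(n,m) := \matrix_(s, a) Hess f a x s i.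
Definition dGmx (i : 'I_n) : 'M[R]_n := \matrix_(s, t) pd i (metric f s t) x.
Definition dGimx (i : 'I_n) : 'M[R]_n := \matrix_(s, t) pd i (fun y => ginv f y s t) x.
Definition dWmx (i : 'I_n) : 'M[R]_(n,m) := \matrix_(l, a) pd i (fun y => Wm f y l a) x.

Lemma dGmxE i : dGmx i = Kmx i *m Dm f x + (Dm f x)^T *m (Kmx i)^T.
Proof.
apply/matrixP => s t; rewrite !mxE pd_metric // -big_split; apply: eq_bigr => a _ /=.
by rewrite !mxE.
Qed.

Lemma dGimx_eq i : dGimx i *m gmx f x + ginv f x *m dGmx i = 0.
Proof.
apply/matrixP => l t; rewrite !mxE.
have E : (fun y => \sum_s ginv f y l s * metric f s t y) = fun _ => (l == t)%:R.
  apply: funext => y; have := mulVmx (gmx_unit f y); move/matrixP/(_ l t).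
  rewrite !mxE => <-; apply: eq_bigr => s _; by rewrite mxE.
have := congr1 (fun F => pd i F x) E; rewrite /= pdC pd_sum; last first.
  by move=> s _; apply: diffM.
move=> E2; apply: (etrans _ E2); rewrite -big_split; apply: eq_bigr => s _ /=; rewrite pdM //.
by rewrite !mxE.
Qed.

Lemma dGimxE i : dGimx i = - (ginv f x *m dGmx i *m ginv f x).
Proof.
have U := gmx_unit f x.
rewrite -[dGimx i]mulmx1 -(mulmxV U) mulmxA.
have -> : dGimx i *m gmx f x = - (ginv f x *m dGmx i).
  by apply/eqP; rewrite -addr_eq0 dGimx_eq.
by rewrite mulNmx.
Qed.

Lemma WmE y l a : Wm f y l a = \sum_s ginv f y l s * Df f a s y.
Proof. by rewrite /Wm mxE; apply: eq_bigr => s _; rewrite !mxE. Qed.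

Lemma CW l a k : Ck k (fun y => Wm f y l a).
Proof.
have -> : (fun y => Wm f y l a) = fun y => \sum_s ginv f y l s * Df f a s y.
  by apply: funext => y; rewrite WmE.
by apply: Ck_sum => s _; apply: CkM; [apply: Cginv | apply: CDf].
Qed.

Lemma dWmxE i : dWmx i = dGimx i *m (Dm f x)^T + ginv f x *m Kmx i.
Proof.
apply/matrixP => l a; rewrite !mxE.
have -> : (fun y => Wm f y l a) = fun y => \sum_s ginv f y l s * Df f a s y.
  by apply: funext => y; rewrite WmE.
rewrite pd_sum; last by move=> s _; apply: diffM.
rewrite -big_split; apply: eq_bigr => s _ /=; rewrite pdM //.
by rewrite !mxE.
Qed.

Lemma dGammaE i l j k : pd i (christoffel f l j k) x =
  \sum_a (pd i (fun y => Hess f a y j k) x * Wm f x l a + Hess f a x j k * dWmx i l a).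
Proof.
have -> : christoffel f l j k = fun y => \sum_a Hess f a y j k * Wm f y l a.
  by apply: funext => y; rewrite christoffelE.
rewrite pd_sum; last first.
  by move=> a _; apply: diffM => //; apply: (Ck_diff (k := 0)); apply: CW.
apply: eq_bigr => a _; rewrite pdM //; last by apply: (Ck_diff (k := 0)); apply: CW.
by rewrite !mxE.
Qed.

End GraphDeriv.
Section Alg2.
Variables (R : fieldType) (n m : nat).
Variables (Hs : 'I_m -> 'M[R]_n) (D : 'M[R]_(m,n)) (Gi : 'M[R]_n).
Hypothesis Hsym : forall a s t, Hs a s t = Hs a t s.
Hypothesis Gsym : Gi^T = Gi.

Let W := Gi *m D^T.
Let P := 1%:M - D *m W.
Let K (i : 'I_n) : 'M[R]_(n,m) := \matrix_(s, a) Hs a s i.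
Let A b := Gi *m Hs b.

Lemma dW_mx i : (- (Gi *m (K i *m D + D^T *m (K i)^T) *m Gi)) *m D^T + Gi *m K i
  = Gi *m K i *m P - W *m (K i)^T *m W.
Proof.
rewrite /P /W mulmxBr mulmx1 !mulmxDr !mulmxDl !mulmxA mulNmx mulmxDl opprD.
by rewrite addrC addrA.
Qed.

End Alg2.
Section Alg3.
Variables (R : fieldType) (n m : nat).
Variables (Hs : 'I_m -> 'M[R]_n) (D : 'M[R]_(m,n)) (Gi : 'M[R]_n).
Hypothesis Hsym : forall a s t, Hs a s t = Hs a t s.

Let W := Gi *m D^T.
Let P := 1%:M - D *m W.
Let K (i : 'I_n) : 'M[R]_(n,m) := \matrix_(s, a) Hs a s i.
Let A b := Gi *m Hs b.

Lemma quad_eq i j k l :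
  \sum_p (\sum_b Hs b i p * W l b) * (\sum_a Hs a j k * W p a)
  = \sum_a Hs a j k * \sum_b W l b * \sum_s Hs b i s * W s a.
Proof.
under eq_bigr do rewrite big_distrl /=.
under eq_bigr do under eq_bigr do rewrite big_distrr /=.
rewrite exchange_big /=.
under eq_bigr do rewrite exchange_big /=.
rewrite exchange_big /=; apply: eq_bigr => a _.
rewrite big_distrr; apply: eq_bigr => b _ /=.
rewrite big_distrr big_distrr; apply: eq_bigr => s _ /=.
ring.
Qed.

Lemma X_lemma (dW : 'M[R]_(n,m)) i j k l :
  dW = Gi *m K i *m P - W *m (K i)^T *m W ->
  \sum_a Hs a j k * dW l a + \sum_p (\sum_a Hs a i p * W l a) * (\sum_b Hs b j k * W p b)
  = \sum_a \sum_b P b a * A b l i * Hs a j k.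
Proof.
move=> ->.
have E1 : forall a, (Gi *m K i *m P) l a = \sum_b A b l i * P b a.
  move=> a; rewrite mxE. apply: eq_bigr => b _; congr (_ * _).
  by rewrite /A !mxE; apply: eq_bigr => s _; rewrite /K mxE.
have E2 : forall a, (W *m (K i)^T *m W) l a = \sum_b W l b * \sum_s Hs b i s * W s a.
  move=> a; rewrite -mulmxA mxE; apply: eq_bigr => b _; congr (_ * _).
  by rewrite mxE; apply: eq_bigr => s _; rewrite /K !mxE Hsym.
have E3 : forall a, (Gi *m K i *m P - W *m (K i)^T *m W) l a
   = (Gi *m K i *m P) l a - (W *m (K i)^T *m W) l a by move=> a; rewrite !mxE.
under eq_bigr do rewrite E3 E1 E2 mulrBr.
rewrite sumrB quad_eq subrK.
apply: eq_bigr => a _; rewrite big_distrr; apply: eq_bigr => b _ /=.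
by rewrite mulrC [A b l i * _]mulrC.
Qed.

End Alg3.
Section Alg4.
Variables (R : fieldType) (n m : nat).

Lemma riem_alg (Hs : 'I_m -> 'M[R]_n) (Wx : 'M[R]_(n,m)) (dW : 'I_n -> 'M[R]_(n,m))
  (T : 'I_m -> 'I_n -> 'I_n -> 'I_n -> R) (Pm : 'M[R]_m) (Am : 'I_m -> 'M[R]_n) l i j k :
  (forall a, T a j k i = T a i k j) ->
  \sum_a Hs a j k * dW i l a + \sum_p (\sum_a Hs a i p * Wx l a) * (\sum_b Hs b j k * Wx p b)
    = \sum_a \sum_b Pm b a * Am b l i * Hs a j k ->
  \sum_a Hs a i k * dW j l a + \sum_p (\sum_a Hs a j p * Wx l a) * (\sum_b Hs b i k * Wx p b)
    = \sum_a \sum_b Pm b a * Am b l j * Hs a i k ->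
  \sum_a (T a j k i * Wx l a + Hs a j k * dW i l a)
  - \sum_a (T a i k j * Wx l a + Hs a i k * dW j l a)
  + \sum_p ((\sum_a Hs a i p * Wx l a) * (\sum_b Hs b j k * Wx p b)
           - (\sum_a Hs a j p * Wx l a) * (\sum_b Hs b i k * Wx p b))
  = \sum_a \sum_b Pm b a * (Am b l i * Hs a j k - Am b l j * Hs a i k).
Proof.
move=> HT X1 X2.
have -> : \sum_a \sum_b Pm b a * (Am b l i * Hs a j k - Am b l j * Hs a i k)
  = \sum_a \sum_b Pm b a * Am b l i * Hs a j k - \sum_a \sum_b Pm b a * Am b l j * Hs a i k.
  rewrite -sumrB; apply: eq_bigr => a _; rewrite -sumrB; apply: eq_bigr => b _.
  by rewrite mulrBr !mulrA.
rewrite -X1 -X2 !big_split /= sumrN.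
rewrite (eq_bigr (fun a => T a i k j * Wx l a)); last by move=> a _; rewrite HT.
ring.
Qed.
End Alg4.
Section Alg5.
Variables (R : comNzRingType) (n m : nat).

Lemma zmod_rearr (V : zmodType) (a b c d u : V) :
  a - c - (b - d) = a - b + (u - c) + (d - u).
Proof.
rewrite [RHS]addrAC -[RHS]addrA subrKA opprB addrACA [RHS]addrACA.
by rewrite [- c - b]addrC.
Qed.

Lemma final_alg (A : 'I_m -> 'M[R]_n) (U : 'M[R]_m) (al : 'I_m) :
  A al *m (\sum_a \sum_b U b a *: (\tr (A b) *: A a - A b *m A a))
  - (\sum_a \sum_b U b a *: (\tr (A b) *: A a - A b *m A a)) *m A al
  = \sum_mu \sum_nu U mu nu *: (\tr (A mu) *: (A al *m A nu - A nu *m A al)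
        + (A mu *m A al - A al *m A mu) *m A nu + A mu *m (A nu *m A al - A al *m A nu)).
Proof.
rewrite mulmx_sumr mulmx_suml -sumrB exchange_big /=.
apply: eq_bigr => b _.
rewrite mulmx_sumr mulmx_suml -sumrB.
apply: eq_bigr => a _.
rewrite -scalemxAr -scalemxAl -scalerBr; congr (_ *: _).
rewrite mulmxBr mulmxBl -scalemxAr -scalemxAl scalerBr !mulmxBl !mulmxBr !mulmxA.
exact: zmod_rearr.
Qed.

End Alg5.
Section Alg6.
Variables (R : comNzRingType) (n m : nat).

Lemma ric_alg (Hs : 'I_m -> 'M[R]_n) (Gi : 'M[R]_n) (Pm : 'M[R]_m)
   (rie : 'I_n -> 'I_n -> 'I_n -> 'I_n -> R) (Ric : 'M[R]_n) :
 (forall j k, Ric j k = \sum_i rie i i j k) ->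
 (forall l i j k, rie l i j k = \sum_a \sum_b Pm b a *
      ((Gi *m Hs b) l i * Hs a j k - (Gi *m Hs b) l j * Hs a i k)) ->
 Ric = \sum_a \sum_b Pm b a *: (\tr (Gi *m Hs b) *: Hs a - (Gi *m Hs b)^T *m Hs a).
Proof.
move=> HR Hr; apply/matrixP => j k.
rewrite HR summxE.
under eq_bigr do rewrite Hr.
rewrite exchange_big; apply: eq_bigr => a _ /=.
rewrite summxE exchange_big; apply: eq_bigr => b _ /=.
rewrite mxE -big_distrr; congr (_ * _).
rewrite sumrB !mxE /mxtrace big_distrl /=.
do 2 f_equal; apply: eq_bigr => i _; by rewrite [in RHS]mxE.
Qed.

Lemma rc_alg (Hs : 'I_m -> 'M[R]_n) (Gi : 'M[R]_n) (Pm : 'M[R]_m) :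
  Gi^T = Gi -> (forall b, (Hs b)^T = Hs b) ->
  Gi *m (\sum_a \sum_b Pm b a *: (\tr (Gi *m Hs b) *: Hs a - (Gi *m Hs b)^T *m Hs a))
  = \sum_a \sum_b Pm b a *: (\tr (Gi *m Hs b) *: (Gi *m Hs a) - (Gi *m Hs b) *m (Gi *m Hs a)).
Proof.
move=> SG SH; rewrite mulmx_sumr; apply: eq_bigr => a _.
rewrite mulmx_sumr; apply: eq_bigr => b _.
rewrite -scalemxAr mulmxBr -scalemxAr trmx_mul SG SH !mulmxA.
by [].
Qed.

End Alg6.
Section GraphRiem.
Variables (R : realType) (n m : nat) (f : 'rV[R]_n -> 'rV[R]_m).
Hypothesis hf : forall a : 'I_m, smooth_fun (fcomp f a).
Variable x : 'rV[R]_n.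

Lemma gmx_sym y : (gmx f y)^T = gmx f y.
Proof. by rewrite gmxE linearD /= trmx1 trmx_mul trmxK. Qed.

Lemma ginv_sym y : (ginv f y)^T = ginv f y.
Proof. by rewrite /ginv trmx_inv gmx_sym. Qed.

Definition Pmx : 'M[R]_m := 1%:M - Dm f x *m Wm f x.

Lemma dWmx_alt i : dWmx f x i = ginv f x *m Kmx f x i *m Pmx
   - Wm f x *m (Kmx f x i)^T *m Wm f x.
Proof.
rewrite (dWmxE hf) (dGimxE hf) (dGmxE hf).
exact: (dW_mx (fun a => Hess f a x) (Dm f x) (ginv f x) i).
Qed.

Local Opaque pd christoffel.
Lemma riemE l i j k : riem f l i j k x =
  \sum_a \sum_b Pmx b a * ((ginv f x *m Hess f b x) l i * Hess f a x j k
                         - (ginv f x *m Hess f b x) l j * Hess f a x i k).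
Proof.
have HS : forall a s t, (fun a => Hess f a x) a s t = (fun a => Hess f a x) a t s.
  by move=> a s t; apply: (Hsym hf).
have X1 := X_lemma HS j k l (dWmx_alt i).
have X2 := X_lemma HS i k l (dWmx_alt j).
have E1 := dGammaE hf x i l j k.
have E2 := dGammaE hf x j l i k.
have CE : forall a b c, christoffel f a b c x = \sum_s Hess f s x b c * Wm f x a s.
  by move=> a b c; apply: christoffelE.
rewrite /riem [pd i _ x]E1 [pd j _ x]E2.
rewrite (eq_bigr (fun p => (\sum_a Hess f a x i p * Wm f x l a) * (\sum_b Hess f b x j k * Wm f x p b)
           - (\sum_a Hess f a x j p * Wm f x l a) * (\sum_b Hess f b x i k * Wm f x p b))); last first.
  by move=> p _; congr (_ * _ - _ * _); apply: CE.
apply: (riem_alg (T := fun a j k i => pd i (fun y => Hess f a y j k) x)).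
- by move=> a; apply: (Tsym hf).
- exact: X1.
- exact: X2.
Qed.
End GraphRiem.
Section Main.
Variables (R : realType) (n m : nat) (f : 'rV[R]_n -> 'rV[R]_m).
Hypothesis hf : forall a : 'I_m, smooth_fun (fcomp f a).
Variable x : 'rV[R]_n.

Lemma Hess_sym b : (Hess f b x)^T = Hess f b x.
Proof. by apply/matrixP => i j; rewrite [LHS]mxE; apply: (Hsym hf). Qed.

Lemma RcE : Rc_op f x = \sum_a \sum_b Pmx f x b a *:
   (\tr (shapeop f b x) *: shapeop f a x - shapeop f b x *m shapeop f a x).
Proof.
rewrite /Rc_op /shapeop.
rewrite (@ric_alg _ _ _ (fun a => Hess f a x) (ginv f x) (Pmx f x) (fun l i j k => riem f l i j k x) (Ricmx f x)).
- apply: rc_alg; [exact: ginv_sym | exact: Hess_sym].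
- by move=> j k; rewrite mxE.
- by move=> l i j k; apply: riemE.
Qed.

Lemma UinvE : Uinv f x = Pmx f x.
Proof.
have E : Umx f x *m Pmx f x = 1%:M.
  rewrite UmxE /Pmx /Wm mulmxBr mulmx1 !mulmxA.
  have -> : (1%:M + Dm f x *m (Dm f x)^T) *m Dm f x = Dm f x *m gmx f x.
    by rewrite gmxE mulmxDl mulmxDr mul1mx mulmx1 mulmxA.
  by rewrite -(mulmxA (Dm f x)) (mulmxV (gmx_unit f x)) mulmx1 addrK.
have [Uu _] := mulmx1_unit E.
by rewrite /Uinv -[Pmx f x]mul1mx -(mulVmx Uu) -mulmxA E mulmx1.
Qed.

Lemma main_thm (alpha : 'I_m) :
  shapeop f alpha x *m Rc_op f x - Rc_op f x *m shapeop f alpha x =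
  \sum_(mu < m) \sum_(nu < m)
     Uinv f x mu nu *:
       (\tr (shapeop f mu x) *: normal_curv f nu alpha x
        + normal_curv f alpha mu x *m shapeop f nu x
        + shapeop f mu x *m normal_curv f alpha nu x).
Proof.
rewrite RcE UinvE /normal_curv.
exact: (final_alg (fun c => shapeop f c x) (Pmx f x) alpha).
Qed.
End Main.

Unset Implicit Arguments.

Theorem lemma2p2 (R : realType) (n m : nat) (f : 'rV[R]_n -> 'rV[R]_m)
  (hf : forall a : 'I_m, smooth_fun (fcomp f a))
  (x : 'rV[R]_n) (alpha : 'I_m) :
  shapeop f alpha x *m Rc_op f x - Rc_op f x *m shapeop f alpha x =
  \sum_(mu < m) \sum_(nu < m)
     Uinv f x mu nu *:
       (\tr (shapeop f mu x) *: normal_curv f nu alpha x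
        + normal_curv f alpha mu x *m shapeop f nu x
        + shapeop f mu x *m normal_curv f alpha nu x).
Proof.
exact: (@main_thm R n m f hf x alpha).
Qed.
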